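(* Let $S$ and $T$ be monoids. Then the direct product $S\times T$ is weakly right coherent if and only if both $S$ and $T$ are weakly right coherent.
   Context: A monoid $M$ is weakly right coherent (WRC) if every finitely generated right ideal of $M$ is finitely presented as a right $M$-act. (It is known that a monoid is WRC if and only if it is both right ideal Howson and finitely right equated.) A semigroup $S$ is right ideal Howson (RIH) if the intersection of any two finitely generated right ideals of $S$ is finitely generated (a right ideal $I$ is finitely generated if $I=XS^1$ for some finite $X\subseteq I$, where $S^1$ is $S$ with an identity adjoined if $S$ has none, and $S^1=S$ otherwise). For $a\in S$, the right annihilator congruence is $\mathbf{r}_S(a)=\{(s,t)\in S\times S\mid as=at\}$; $S$ is finitely right equated (FRE) if $\mathbf{r}_S(a)$ is finitely generated as a right congruence for every $a\in S$. *)

(* Defs.v *)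
From mathcomp Require Import ssreflect ssrfun ssrbool eqtype ssrnat fintype.
From Stdlib Require Import List.

Set Implicit Arguments.
Unset Strict Implicit.

Record monoid := Monoid {
  mcar :> Type;
  mmul : mcar -> mcar -> mcar;
  mone : mcar;
  mmulA : forall a b c, mmul a (mmul b c) = mmul (mmul a b) c;
  mmul1l : forall a, mmul mone a = a;
  mmul1r : forall a, mmul a mone = a
}.

Definition prod_monoid (S T : monoid) : monoid.
Proof.
refine (@Monoid (S * T)%type
  (fun p q => (mmul p.1 q.1, mmul p.2 q.2)) (mone S, mone T) _ _ _).
- by move=> [a1 a2] [b1 b2] [c1 c2] /=; rewrite !mmulA.
- by move=> [a1 a2] /=; rewrite !mmul1l.
- by move=> [a1 a2] /=; rewrite !mmul1r.
Defined.

Section Acts.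
Variable M : monoid.

Definition is_right_ideal (I : M -> Prop) : Prop :=
  forall a s, I a -> I (mmul a s).

Definition fg_right_ideal (I : M -> Prop) : Prop :=
  is_right_ideal I /\
  exists X : list M, forall a, I a <-> exists x s, In x X /\ a = mmul x s.

Definition free_act (n : nat) : Type := ('I_n * M)%type.
Definition free_mul (n : nat) (p : free_act n) (t : M) : free_act n :=
  (p.1, mmul p.2 t).

Inductive gen_rcong (n : nat) (H : list (free_act n * free_act n)) :
    free_act n -> free_act n -> Prop :=
| grc_base p q : In (p, q) H -> gen_rcong H p q
| grc_refl p : gen_rcong H p p
| grc_sym p q : gen_rcong H p q -> gen_rcong H q p
| grc_trans p q r : gen_rcong H p q -> gen_rcong H q r -> gen_rcong H p r
| grc_act p q t : gen_rcong H p q -> gen_rcong H (free_mul p t) (free_mul q t).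

(** The right ideal I, viewed as a right M-act under right multiplication,
    is finitely presented: there are finitely many generators n, finitely
    many relations H, and a surjective act morphism phi from the free act
    on n generators onto I whose kernel is exactly the right congruence
    generated by H (i.e. I is isomorphic to F_n / <H>). *)
Definition fp_ideal_act (I : M -> Prop) : Prop :=
  exists (n : nat) (H : list (free_act n * free_act n)) (phi : free_act n -> M),
    (forall p t, phi (free_mul p t) = mmul (phi p) t) /\
    (forall p, I (phi p)) /\
    (forall a, I a -> exists p, phi p = a) /\
    (forall p q, phi p = phi q <-> gen_rcong H p q).

Definition weakly_right_coherent : Prop :=
  forall I : M -> Prop, fg_right_ideal I -> fp_ideal_act I.

End Acts.

(* Main.v *)
Require Import Defs.
From mathcomp Require Import ssreflect ssrfun ssrbool eqtype ssrnat seq fintype.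
From Stdlib Require Import List ClassicalEpsilon.
Set Implicit Arguments.
Unset Strict Implicit.

Lemma In_mem (T : eqType) (x : T) (s : list T) : x \in s -> In x s.
Proof.
elim: s => [|y s IH] //=; rewrite seq.in_cons => /orP [/eqP ->|h]; [by left|by right; apply: IH].
Qed.

Lemma In_enum n (k : 'I_n) : In k (enum 'I_n).
Proof. by apply: In_mem; rewrite mem_enum. Qed.

Lemma grc_transport (M N : monoid) n m (H : list (free_act M n * free_act M n))
  (H' : list (free_act N m * free_act N m)) (F : free_act M n -> free_act N m) (h : M -> N) :
  (forall p t, F (free_mul p t) = free_mul (F p) (h t)) ->
  (forall p q, In (p, q) H -> gen_rcong H' (F p) (F q)) ->
  forall p q, gen_rcong H p q -> gen_rcong H' (F p) (F q).
Proof.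
move=> hF hb p q; elim=> {p q}.
- by move=> p q /hb.
- by move=> p; apply: grc_refl.
- by move=> p q _ IH; apply: grc_sym.
- by move=> p q r _ IH1 _ IH2; apply: grc_trans IH2.
- by move=> p q t _ IH; rewrite !hF; apply: grc_act.
Qed.

Lemma grc_ker (M : monoid) n (H : list (free_act M n * free_act M n)) (phi : free_act M n -> M) :
  (forall p t, phi (free_mul p t) = mmul (phi p) t) ->
  (forall p q, In (p, q) H -> phi p = phi q) ->
  forall p q, gen_rcong H p q -> phi p = phi q.
Proof.
move=> hm hb p q; elim=> {p q}.
- by move=> p q /hb.
- by [].
- by move=> p q _ ->.
- by move=> p q r _ -> _ ->.
- by move=> p q t _ IH; rewrite !hm IH.
Qed.

Definition psi (M : monoid) n (x : 'I_n -> M) (p : free_act M n) : M := mmul (x p.1) p.2.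

Lemma psi_mul (M : monoid) n (x : 'I_n -> M) p t : psi x (free_mul p t) = mmul (psi x p) t.
Proof. by rewrite /psi /= mmulA. Qed.

Definition KF (M : monoid) := forall n (x : 'I_n -> M),
  exists H, forall p q, psi x p = psi x q <-> gen_rcong H p q.

Definition cid := constructive_indefinite_description.

Lemma presL (M : monoid) (I : M -> Prop) n0 (H : list (free_act M n0 * free_act M n0))
  (phi : free_act M n0 -> M) m (x : 'I_m -> M) :
  (forall p t, phi (free_mul p t) = mmul (phi p) t) ->
  (forall a, I a -> exists p, phi p = a) ->
  (forall p q, phi p = phi q <-> gen_rcong H p q) ->
  (forall j, I (x j)) ->
  (forall i, exists j s, phi (i, mone M) = mmul (x j) s) ->
  exists H', forall p q, psi x p = psi x q <-> gen_rcong H' p q.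
Proof.
move=> hm hs hk hx hq.
pose pj := fun j => proj1_sig (cid (hs _ (hx j))).
have hpj : forall j, phi (pj j) = x j by move=> j; exact: proj2_sig (cid (hs _ (hx j))).
have hq' : forall i, exists qq : free_act M m, phi (i, mone M) = psi x qq.
  by move=> i; have [j [s e]] := hq i; exists (j, s).
pose qi := fun i => proj1_sig (cid (hq' i)).
have hqi : forall i, phi (i, mone M) = psi x (qi i) by move=> i; exact: proj2_sig (cid (hq' i)).
pose al := fun p : free_act M n0 => free_mul (qi p.1) p.2.
have halm : forall p t, al (free_mul p t) = free_mul (al p) t.
  by move=> [i s] t; rewrite /al /free_mul /= mmulA.
have hpsial : forall p, psi x (al p) = phi p.
  move=> [i s]; rewrite /al psi_mul -hqi -hm /free_mul /= mmul1l //.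
exists (map (fun pq => (al pq.1, al pq.2)) H ++ map (fun j => ((j, mone M), al (pj j))) (enum 'I_m)).
move=> p q; split.
- have gen : forall (j : 'I_m) s, gen_rcong (map (fun pq => (al pq.1, al pq.2)) H ++
      map (fun j => ((j, mone M), al (pj j))) (enum 'I_m)) (j, s) (al (free_mul (pj j) s)).
    move=> j s; rewrite halm.
    have -> : (j, s) = free_mul (j, mone M) s by rewrite /free_mul /= mmul1l.
    apply: grc_act; apply: grc_base; apply: in_or_app; right.
    by apply: (in_map (fun j => ((j, mone M), al (pj j)))); apply: In_enum.
  move: p q => [j s] [l t] e.
  apply: grc_trans (gen j s) _; apply: grc_sym; apply: grc_trans (gen l t) _; apply: grc_sym.
  apply: (grc_transport (H := H) (h := id)).
  - exact: halm.
  - by move=> pp qq hin; apply: grc_base; apply: in_or_app; left;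
       apply: (in_map (fun pq => (al pq.1, al pq.2)) H (pp, qq)).
  - by apply/hk; rewrite !hm !hpj.
- move=> hg; apply: (grc_ker _ _ hg); first exact: psi_mul.
  move=> pp qq hin; case: (in_app_or _ _ _ hin) => {}hin; move: hin; rewrite in_map_iff.
  + move=> [[a b] [[<- <-] hin]].
  + by rewrite !hpsial; apply/hk/grc_base.
  + move=> [j [[<- <-] _]]; by rewrite hpsial hpj /psi /= mmul1r.
Qed.

Lemma WRC_KF (M : monoid) : weakly_right_coherent M -> KF M.
Proof.
move=> hw n x.
pose I := fun a : M => exists i s, a = mmul (x i) s.
have hI : fg_right_ideal I.
  split.
  - by move=> a s [i [t ->]]; exists i, (mmul t s); rewrite mmulA.
  - exists (map x (enum 'I_n)) => a; split.
    + move=> [i [s ->]]; exists (x i), s; split => //.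
      by apply: (in_map x); apply: In_enum.
    + move=> [y [s [hy ->]]]; move: hy; rewrite in_map_iff => [[i [<- _]]].
      by exists i, s.
have [n0 [H [phi [hm [hin [hs hk]]]]]] := hw I hI.
apply: (presL (I := I) hm hs hk).
- by move=> j; exists j, (mone M); rewrite mmul1r.
- by move=> i; have [j [s e]] := hin (i, mone M); exists j, s.
Qed.

Lemma KF_WRC (M : monoid) : KF M -> weakly_right_coherent M.
Proof.
move=> hk I [hri [X hX]].
pose x := fun i : 'I_(length X) => nth i X (mone M).
have [H hH] := hk _ x.
exists (length X), H, (psi x); split; [|split; [|split]].
- exact: psi_mul.
- move=> [i s]; apply/hX; exists (x i), s; split => //.
  by apply: nth_In; apply/ltP.
- move=> a /hX [y [s [hy ->]]].
  have [i [hi e]] := In_nth X y (mone M) hy.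
  by exists (Ordinal (introT ltP hi), s); rewrite /psi /x /= e.
- exact: hH.
Qed.

Definition FRE (M : monoid) := forall a : M, exists H : list (free_act M 1 * free_act M 1),
  forall p q, mmul a p.2 = mmul a q.2 <-> gen_rcong H p q.

Definition RIH (M : monoid) := forall a b : M, exists W : list (M * M),
  (forall w, In w W -> mmul a w.1 = mmul b w.2) /\
  (forall s t, mmul a s = mmul b t -> exists w v, In w W /\ mmul a s = mmul (mmul a w.1) v).

Lemma KF_FRE (M : monoid) : KF M -> FRE M.
Proof. by move=> hk a; apply: (hk 1 (fun _ => a)). Qed.

Lemma KF_RIH (M : monoid) : KF M -> RIH M.
Proof.
move=> hk a b.
pose x := fun i : 'I_2 => if nat_of_ord i == 0 then a else b.
have [H hH] := hk _ x.
pose f := fun pq : free_act M 2 * free_act M 2 =>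
  if (nat_of_ord pq.1.1 == nat_of_ord pq.2.1 :> nat) then nil
  else if (nat_of_ord pq.1.1 == 0 :> nat) then (pq.1.2, pq.2.2) :: nil else (pq.2.2, pq.1.2) :: nil.
have ord2 : forall i j : 'I_2, nat_of_ord i <> nat_of_ord j -> nat_of_ord i <> 0 -> nat_of_ord j = 0.
  by move=> [[|[|k]] hi] [[|[|k']] hj].
have xa : forall i : 'I_2, nat_of_ord i = 0 -> x i = a by move=> i; rewrite /x => ->.
have xb : forall i : 'I_2, nat_of_ord i <> 0 -> x i = b by move=> i; rewrite /x => /eqP/negbTE ->.
exists (flat_map f H); split.
- move=> w; rewrite in_flat_map => [[[p q] [hin]]].
  have e : psi x p = psi x q by apply/hH/grc_base.
  rewrite /f /=; case: eqP => // hne; case: eqP => h0 /=; move=> [<-|[]] //=.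
  + rewrite -(xa _ h0) -(xb q.1) //; first by move=> hq; apply: hne; rewrite h0 hq.
  + by rewrite -(xa q.1 (ord2 _ _ hne h0)) -(xb p.1) //; symmetry.
- have cross : forall p q, gen_rcong H p q -> nat_of_ord p.1 <> nat_of_ord q.1 ->
      exists w v, In w (flat_map f H) /\ psi x p = mmul (mmul a w.1) v.
    move=> p q hg; elim: hg => {p q}.
    + move=> p q hin hne; have e : psi x p = psi x q by apply/hH/grc_base.
      case: (eqVneq (nat_of_ord p.1) 0) => h0.
      * exists (p.2, q.2), (mone M); split.
          by apply/in_flat_map; exists (p, q); split => //; rewrite /f /= h0 eq_sym (introF eqP) ?h0 //; [left | move=> hh; apply: hne; rewrite h0 hh].
        by rewrite mmul1r /psi (xa _ h0).
      * have hq0 : nat_of_ord q.1 = 0 by apply: ord2 hne _; apply/eqP.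
        exists (q.2, p.2), (mone M); split.
          apply/in_flat_map; exists (p, q); split => //; rewrite /f /= (negbTE h0).
          by rewrite (introF eqP) //; left.
        by rewrite mmul1r e /psi (xa _ hq0).
    + by move=> p [].
    + move=> p q hg IH hne.
      have [w [v [hw e]]] := IH (fun h => hne (esym h)).
      exists w, v; split => //; rewrite -e; symmetry; apply/hH/hg.
    + move=> p q r hg1 IH1 hg2 IH2 hne.
      case: (eqVneq (nat_of_ord p.1) (nat_of_ord q.1)) => h.
      * have [w [v [hw e]]] := IH2 (fun h' => hne (etrans h h')).
        by exists w, v; split => //; rewrite -e; apply/hH.
      * by apply: IH1; apply/eqP.
    + move=> p q t hg IH hne.
      have [w [v [hw e]]] := IH hne.
      by exists w, (mmul v t); split => //; rewrite psi_mul e mmulA.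
  move=> s t e.
  have := cross (Ordinal (isT : 0 < 2), s) (Ordinal (isT : 1 < 2), t).
  case.
  + by apply/hH.
  + by [].
  + by move=> w [v [hw e']]; exists w, v.
Qed.

Lemma FRE_RIH_KF (M : monoid) : FRE M -> RIH M -> KF M.
Proof.
move=> hf hr n x.
pose Hr := fun a => proj1_sig (cid (hf a)).
have hHr : forall a p q, mmul a p.2 = mmul a q.2 <-> gen_rcong (Hr a) p q.
  by move=> a; exact: proj2_sig (cid (hf a)).
pose Wf := fun a b => proj1_sig (cid (hr a b)).
have hWf : forall a b, (forall w, In w (Wf a b) -> mmul a w.1 = mmul b w.2) /\
  (forall s t, mmul a s = mmul b t -> exists w v, In w (Wf a b) /\ mmul a s = mmul (mmul a w.1) v).
  by move=> a b; exact: proj2_sig (cid (hr a b)).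
pose F := fun (k : 'I_n) (p : free_act M 1) => (k, p.2) : free_act M n.
pose G := flat_map (fun k => map (fun pq => (F k pq.1, F k pq.2)) (Hr (x k)) ++
   flat_map (fun l => map (fun w => ((k, w.1), (l, w.2))) (Wf (x k) (x l))) (enum 'I_n)) (enum 'I_n).
have tr : forall k s t, mmul (x k) s = mmul (x k) t -> gen_rcong G (k, s) (k, t).
  move=> k s t e.
  have hg : gen_rcong (Hr (x k)) (ord0, s) (ord0, t) by apply/hHr.
  apply: (grc_transport (F := F k) (h := id) _ _ hg) => //.
  move=> p q hin; apply: grc_base; apply/in_flat_map; exists k; split; first exact: In_enum.
  by apply: in_or_app; left; apply: (in_map (fun pq => (F k pq.1, F k pq.2)) _ (p, q)).
exists G => p q; split.
- move: p q => [k s] [l t]; rewrite /psi /= => e.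
  have [w [v [hw e2]]] := (proj2 (hWf (x k) (x l))) s t e.
  have ew := proj1 (hWf (x k) (x l)) w hw.
  apply: (grc_trans (q := (k, mmul w.1 v))); first by apply: tr; rewrite mmulA.
  apply: (grc_trans (q := (l, mmul w.2 v))).
    have -> : (k, mmul w.1 v) = free_mul (k, w.1) v by [].
    have -> : (l, mmul w.2 v) = free_mul (l, w.2) v by [].
    apply: grc_act; apply: grc_base; apply/in_flat_map; exists k; split; first exact: In_enum.
    apply: in_or_app; right; apply/in_flat_map; exists l; split; first exact: In_enum.
    by apply: (in_map (fun w => ((k, w.1), (l, w.2))) _ w).
  by apply: tr; rewrite mmulA -ew -e2 e.
- move=> hg; apply: (grc_ker _ _ hg); first exact: psi_mul.
  move=> pp qq; rewrite in_flat_map => [[k [_ hin]]].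
  case: (in_app_or _ _ _ hin) => {}hin.
  + move: hin; rewrite in_map_iff => [[[a b] [[<- <-] hin]]].
    by rewrite /psi /=; apply/hHr/grc_base.
  + move: hin; rewrite in_flat_map => [[l [_]]]; rewrite in_map_iff => [[w [[<- <-] hw]]].
    by rewrite /psi /=; apply: (proj1 (hWf (x k) (x l))).
Qed.

Lemma KF_retract (M N : monoid) (f : M -> N) (g : N -> M) :
  (forall a b, f (mmul a b) = mmul (f a) (f b)) ->
  (forall a b, g (mmul a b) = mmul (g a) (g b)) ->
  (forall a, f (g a) = a) -> KF M -> KF N.
Proof.
move=> hf hg hfg hk n x.
have [H hH] := hk n (fun i => g (x i)).
pose F := fun p : free_act M n => (p.1, f p.2) : free_act N n.
exists (map (fun pq => (F pq.1, F pq.2)) H) => p q; split.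
- move: p q => [i s] [j t]; rewrite /psi /= => e.
  have hg' : gen_rcong H (i, g s) (j, g t) by apply/hH; rewrite /psi /= -!hg e.
  have := grc_transport (F := F) (h := f) _ _ hg'; rewrite /F /= !hfg; apply.
    by move=> pp tt; rewrite /F /free_mul /= hf.
  move=> pp qq hin; apply: grc_base.
  by apply: (in_map (fun pq => (F pq.1, F pq.2)) _ (pp, qq)).
- move=> hg'; apply: (grc_ker _ _ hg'); first exact: psi_mul.
  move=> pp qq; rewrite in_map_iff => [[[a b] [[<- <-] hin]]].
  have e : psi (fun i => g (x i)) a = psi (fun i => g (x i)) b by apply/hH/grc_base.
  by move: e; rewrite /psi /F /= => e; rewrite -(hfg (x a.1)) -(hfg (x b.1)) -!hf e.
Qed.

Lemma FRE_prod (S T : monoid) : FRE S -> FRE T -> FRE (prod_monoid S T).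
Proof.
move=> hS hT [a b].
have [Hs hs] := hS a; have [Ht ht] := hT b.
pose G1 := fun p : free_act S 1 => (p.1, (p.2, mone T)) : free_act (prod_monoid S T) 1.
pose G2 := fun p : free_act T 1 => (p.1, (mone S, p.2)) : free_act (prod_monoid S T) 1.
pose H := map (fun pq => (G1 pq.1, G1 pq.2)) Hs ++ map (fun pq => (G2 pq.1, G2 pq.2)) Ht.
exists H => p q; split.
- move: p q => [o [s t]] [o' [s' t']] /= [e1 e2].
  apply: (@grc_trans _ _ H _ ((o', (s', t)) : free_act (prod_monoid S T) 1)).
    have hg : gen_rcong Hs (o, s) (o', s') by apply/hs.
    refine (grc_transport (F := fun p : free_act S 1 => (p.1, (p.2, t)) : free_act (prod_monoid S T) 1)
             (h := fun u => (u, mone T) : prod_monoid S T) _ _ hg).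
      by move=> pp u; rewrite /free_mul /= mmul1r.
    move=> pp qq hin.
    have hb : gen_rcong H (G1 pp) (G1 qq).
      by apply: grc_base; apply: in_or_app; left; apply: (in_map (fun pq => (G1 pq.1, G1 pq.2)) _ (pp, qq)).
    have := grc_act ((mone S, t) : prod_monoid S T) hb; rewrite /free_mul /G1 /= !mmul1r !mmul1l; exact.
  have hg : gen_rcong Ht (o', t) (o', t') by apply/ht.
  refine (grc_transport (F := fun p : free_act T 1 => (p.1, (s', p.2)) : free_act (prod_monoid S T) 1)
           (h := fun u => (mone S, u) : prod_monoid S T) _ _ hg).
    by move=> pp u; rewrite /free_mul /= mmul1r.
  move=> pp qq hin.
  have hb : gen_rcong H (G2 pp) (G2 qq).
    by apply: grc_base; apply: in_or_app; right; apply: (in_map (fun pq => (G2 pq.1, G2 pq.2)) _ (pp, qq)).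
  have := grc_act ((s', mone T) : prod_monoid S T) hb; rewrite /free_mul /G2 /= !mmul1r !mmul1l; exact.
- move=> hg; apply: (grc_ker (phi := fun p : free_act (prod_monoid S T) 1 => mmul ((a, b) : prod_monoid S T) p.2) _ _ hg).
    by move=> pp u /=; rewrite !mmulA.
  move=> pp qq hin; case: (in_app_or _ _ _ hin) => {}hin; move: hin; rewrite in_map_iff.
  + move=> [[x y] [[<- <-] hin]] /=; congr pair; apply/hs/grc_base => //.
  + move=> [[x y] [[<- <-] hin]] /=; congr pair; apply/ht/grc_base => //.
Qed.

Lemma RIH_prod (S T : monoid) : RIH S -> RIH T -> RIH (prod_monoid S T).
Proof.
move=> hS hT [a b] [c d].
have [Ws [hs1 hs2]] := hS a c; have [Wt [ht1 ht2]] := hT b d.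
exists (flat_map (fun p => map (fun q => (((p.1, q.1), (p.2, q.2)) : prod_monoid S T * prod_monoid S T)) Wt) Ws).
split.
- move=> w; rewrite in_flat_map => [[p [hp]]]; rewrite in_map_iff => [[q [<- hq]]] /=.
  by rewrite hs1 // ht1.
- move=> [s t] [s' t'] /= [e1 e2].
  have [w [v [hw ew]]] := hs2 _ _ e1; have [w' [v' [hw' ew']]] := ht2 _ _ e2.
  exists ((w.1, w'.1), (w.2, w'.2)), (v, v'); split.
    apply/in_flat_map; exists w; split => //.
    by apply: (in_map (fun q => (((w.1, q.1), (w.2, q.2)) : prod_monoid S T * prod_monoid S T)) _ w').
  by rewrite /= ew ew'.
Qed.

Theorem mainTheorem1 (S T : monoid) :
  weakly_right_coherent (prod_monoid S T) <->
  weakly_right_coherent S /\ weakly_right_coherent T.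
Proof.
split.
- move=> /WRC_KF hk; split; apply: KF_WRC.
  + apply: (KF_retract (f := fun p : prod_monoid S T => p.1) (g := fun s => (s, mone T) : prod_monoid S T)) hk => //.
    by move=> x y /=; rewrite mmul1r.
  + apply: (KF_retract (f := fun p : prod_monoid S T => p.2) (g := fun s => (mone S, s) : prod_monoid S T)) hk => //.
    by move=> x y /=; rewrite mmul1r.
- move=> [/WRC_KF hS /WRC_KF hT]; apply: KF_WRC; apply: FRE_RIH_KF.
  + by apply: FRE_prod; apply: KF_FRE.
  + by apply: RIH_prod; apply: KF_RIH.
Qed.
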